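(* Let $Q=\{q_1,\ldots,q_n\}\subset\mathbb{P}^1$ be distinct points and $\vec g=(g_1,\ldots,g_n)$ effective divisors on $[0,1)$ of common degree $r$, $g_i=\sum_\alpha m_i(\alpha)[\alpha]$, with $\sum_{i,\alpha}m_i(\alpha)\alpha\in\mathbb{Z}$. Suppose the defect is strictly positive: $\delta(\vec g)=r(n-2)-\sum_i T(g_i)>0$. Fix, for each $i$, any good arrangement $a_{i,1},\ldots,a_{i,r}$ of $g_i$. Then it is possible to choose integers $k_1,\ldots,k_r$ satisfying $k_{j+1}\geq \tau_j+k_j+2-n$ for all $j=1,\ldots,r$ (indices modulo $r$, so $k_{r+1}=k_1$) such that $\deg^{\rm par}(E)=0$, where $E=\bigoplus_{j=1}^r E^j$ and $E^j=[k_j;a_{1,j},\ldots,a_{n,j}]$.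
   Context: A parabolic line bundle on $(\mathbb{P}^1,Q)$ is written $[k;a_1,\ldots,a_n]$ with $k\in\mathbb{Z}$, $a_i\in[0,1)$, meaning $\mathcal{O}(k)(a_1q_1+\cdots+a_nq_n)$ (underlying bundle $\mathcal{O}(k)$, weight $a_i$ at $q_i$); its parabolic degree is $k+\sum_i a_i$, and the parabolic degree of a direct sum is the sum. An arrangement of $g_i$ is a sequence $a_{i,1},\ldots,a_{i,r}\in[0,1)$ in which each $\alpha$ occurs exactly $m_i(\alpha)$ times. Indices are taken modulo $r$ ($a_{i,r+1}=a_{i,1}$). An arrangement is good if $\#\{t\in\{1,\ldots,r\}: a_{i,t}\geq a_{i,t+1}\}$ is minimal among all arrangements of $g_i$; this minimum is denoted $T(g_i)$. For the chosen arrangements, $\tau_j=\#\{i: a_{i,j}\geq a_{i,j+1}\}$. *)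

(* Defs.v *)
From HB Require Import structures.
From mathcomp Require Import all_boot all_order all_algebra.
Set Implicit Arguments. Unset Strict Implicit. Unset Printing Implicit Defensive.
Import Order.TTheory GRing.Theory Num.Theory.
Local Open Scope ring_scope.

(* A parabolic line bundle [k; a_1, ..., a_n] on (P^1, Q), |Q| = n:
   underlying bundle O(k), weight a_i at q_i. *)
Record parLB (R : Type) (n : nat) := ParLB { plb_deg : int; plb_wt : 'I_n -> R }.

Definition pardeg (R : numDomainType) n (L : parLB R n) : R :=
  (plb_deg L)%:~R + \sum_(i < n) plb_wt L i.

(* parabolic degree of a direct sum (given as the list of its summands) *)
Definition pardeg_sum (R : numDomainType) n (E : seq (parLB R n)) : R :=
  \sum_(L <- E) pardeg L.

(* An effective divisor g = sum_alpha m(alpha)[alpha] of degree r on [0,1)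
   is represented by a list of length r listing each alpha m(alpha) times
   (order irrelevant). *)
Definition divisor_on01 (R : numDomainType) (g : seq R) :=
  all (fun x => (0 <= x) && (x < 1)) g.

Definition arrangement (R : numDomainType) (s g : seq R) := perm_eq s g.

Definition cdesc (R : numDomainType) (s : seq R) : nat :=
  count (fun t => nth (0:R) s (t.+1 %% size s)%N <= nth (0:R) s t) (iota 0 (size s)).

Definition Tmin (R : numDomainType) (g : seq R) : nat :=
  \big[minn/size g]_(s <- permutations g) cdesc s.

Definition good_arrangement (R : numDomainType) (s g : seq R) :=
  arrangement s g /\ forall s', arrangement s' g -> (cdesc s <= cdesc s')%N.

(* tau_j = #{i : a_{i,j} >= a_{i,j+1}}  (0-based j, indices modulo r) *)
Definition is_desc (R : numDomainType) (s : seq R) (r j : nat) : bool :=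
  nth 0 s (j.+1 %% r)%N <= nth 0 s j.
Definition tau (R : numDomainType) n (r : nat) (a : 'I_n -> seq R) (j : nat) : nat :=
  (\sum_(i < n) (is_desc (a i) r j : nat))%N.

Definition Ej (R : numDomainType) n (a : 'I_n -> seq R) (k : nat -> int) (j : nat)
  : parLB R n := ParLB (k j) (fun i => nth (0:R) (a i) j).

(* Main.v *)
Require Import Defs.
From HB Require Import structures.
From mathcomp Require Import all_boot all_order all_algebra.
From mathcomp Require Import intdiv zify.
Import Order.TTheory GRing.Theory Num.Theory.
Local Open Scope ring_scope.

Lemma tminP (R : numDomainType) (g : seq R) (x : nat) :
  (x <= size g)%N -> (forall s, perm_eq s g -> (x <= cdesc s)%N) -> (x <= Tmin g)%N.
Proof.
rewrite /Tmin big_seq => H1 H2.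
apply: (big_ind (fun y => x <= y)%N) => //.
  by move=> u v; rewrite leq_min => -> ->.
by move=> s; rewrite mem_permutations; apply: H2.
Qed.

Lemma sum_ind (r m : nat) : (\sum_(j < r) ((m <= j)%N : nat) = r - m)%N.
Proof.
elim: r => [|r IH]; first by rewrite big_ord0.
rewrite big_ord_recr /= IH.
case: (leqP m r) => h; lia.
Qed.

Lemma sumPosz (I : Type) (s : seq I) (F : I -> nat) :
  (\sum_(i <- s) (F i)%:Z) = ((\sum_(i <- s) F i)%N)%:Z.
Proof. by rewrite (big_morph Posz PoszD erefl). Qed.

Theorem theorem6p8 (R : realFieldType) (n r : nat) (g : 'I_n -> seq R) :
  (forall i, size (g i) = r) ->
  (forall i, divisor_on01 (g i)) ->
  (exists z : int, \sum_(i < n) \sum_(x <- g i) x = z%:~R) ->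
  (0 < (r%:Z * (n%:Z - 2) - \sum_(i < n) (Tmin (g i))%:Z)%R) ->
  forall a : 'I_n -> seq R, (forall i, good_arrangement (a i) (g i)) ->
  exists k : nat -> int,
    (forall j, (j < r)%N ->
       k (j.+1 %% r)%N >= (tau r a j)%:Z + k j + 2 - n%:Z) /\
    pardeg_sum [seq Ej a k j | j <- iota 0 r] = 0.
Proof.
move=> Hsz _ [z Hz] Hd a Hgood.
have Hsa i : size (a i) = r by rewrite (perm_size (Hgood i).1) Hsz.
have Hca i : (cdesc (a i) <= Tmin (g i))%N.
  apply: tminP; last exact: (Hgood i).2.
  rewrite Hsz -(Hsa i) /cdesc; apply: leq_trans (count_size _ _) _; by rewrite size_iota.
have Htau : (\sum_(j < r) tau r a j = \sum_i cdesc (a i))%N.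
  rewrite /tau exchange_big /=; apply: eq_bigr => i _.
  rewrite /cdesc Hsa -sum1_count big_mkcond /=.
  have -> : iota 0 r = index_iota 0 r by rewrite /index_iota subn0.
  rewrite big_mkord [RHS]big_mkcond /=.
  by apply: eq_bigr => j _; rewrite /is_desc; case: ifP.
pose c j : int := (tau r a j)%:Z + 2 - n%:Z.
pose P (j : nat) : int := \sum_(l < j) c l.
have Cneg : P r < 0.
  rewrite /P /c.
  have -> : \sum_(l < r) ((tau r a l)%:Z + 2 - n%:Z) = (\sum_(l < r) tau r a l)%N%:Z + r%:Z * (2 - n%:Z).
    under eq_bigr => l _ do rewrite -addrA.
    rewrite big_split /= -sumPosz; congr (_ + _).
    by rewrite sumr_const card_ord -[in RHS]natz mulr_natl.
  rewrite sumPosz in Hd; rewrite Htau.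
  have : (\sum_i cdesc (a i) <= \sum_i Tmin (g i))%N by apply: leq_sum => i _.
  lia.
have rpos : (0 < r)%N.
  case: (posnP r) => [r0|//]; rewrite r0 sumPosz in Hd; lia.
have W : \sum_(j <- iota 0 r) \sum_(i < n) nth 0 (a i) j = z%:~R.
  rewrite exchange_big /= -Hz; apply: eq_bigr => i _.
  rewrite -(perm_big _ (Hgood i).1) /= [RHS](big_nth 0) Hsa /index_iota subn0.
  by [].
have Hiota : forall F : nat -> int, \sum_(j <- iota 0 r) F j = \sum_(j < r) F j.
  move=> F; have -> : iota 0 r = index_iota 0 r by rewrite /index_iota subn0.
  exact: big_mkord.
pose N : int := - z - \sum_(j < r) P j.
pose q : int := (N %/ r)%Z.
pose s : nat := `|(N %% r)%Z|%N.
have Hs : s%:Z = (N %% r)%Z.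
  rewrite /s abszE ger0_norm // modz_ge0 //; lia.
have sr : (s < r)%N.
  have := ltz_pmod N (_ : 0 < r%:Z); rewrite -Hs; lia.
have HN : N = q * r%:Z + s%:Z by rewrite Hs /q; exact: divz_eq.
pose m : nat := (r - s)%N.
pose k (j : nat) : int := q + P j + ((m <= j)%N : nat)%:Z.
exists k; split.
  move=> j hj.
  case: (ltnP j.+1 r) => h.
    rewrite modn_small // /k /P big_ord_recr /= -/(c j).
    have hb : (nat_of_bool (m <= j)%N <= nat_of_bool (m <= j.+1)%N)%N.
      by case: (leqP m j) => h1 //; rewrite (leqW h1).
    move: hb; set b1 := nat_of_bool _; set b2 := nat_of_bool _.
    have cj : c j = (tau r a j)%:Z + 2 - n%:Z by [].
    move: cj; set Pj := \sum_(i < j) c i; set cc := c j; lia.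
  have e : r = j.+1 by lia.
  have -> : (j.+1 %% r)%N = 0%N by rewrite -e modnn.
  rewrite /k /P big_ord0.
  have -> : (m <= 0)%N = false by rewrite /m; lia.
  have Cj : P j.+1 < 0 by rewrite -e.
  move: Cj; rewrite /P big_ord_recr /=.
  have : (nat_of_bool (m <= j)%N <= 1)%N by case: (m <= j)%N.
  set b1 := nat_of_bool _.
  have cj : c j = (tau r a j)%:Z + 2 - n%:Z by [].
  move: cj; set Pj := \sum_(i < j) c i; set cc := c j; lia.
rewrite /pardeg_sum big_map /pardeg /=.
rewrite big_split /= W -(rmorph_sum intr) -intrD.
suff -> : \sum_(j <- iota 0 r) k j + z = 0 by [].
rewrite Hiota /k big_split big_split /= sumPosz sum_ind sumr_const card_ord.
have : N = - z - \sum_(j < r) P j by [].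
rewrite -mulr_natr natz /m => hN.
clearbody k m q s N. move: hN HN sr; set S := \sum_(i < r) P i. nia.
Qed.
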